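(* Let $R\subseteq\mathbb N$ be infinite. Then $R$ is sparse if and only if $R$ is regular.
   Context: Enumerate $R$ increasingly as $(r_n)_{n\in\mathbb N}$; $\sigma:R\to R$ is the successor map $\sigma(r_n)=r_{n+1}$, $\sigma^k$ its $k$-fold iterate ($\sigma^0=\mathrm{id}$). An operator on $R$ is a function $R\to\mathbb Z$, $z\mapsto a_m\sigma^m(z)+\dots+a_0\sigma^0(z)$ with $a_i\in\mathbb Z$. For an operator $A$: $A=_R0$ if $Az=0$ for all $z\in R$; $A>_R0$ (resp. $A<_R0$) if $Az>0$ (resp. $Az<0$) for all but finitely many $z\in R$. $R$ is sparse if every operator $A$ satisfies (S1) $A=_R0$ or $A>_R0$ or $A<_R0$; and (S2) if $A>_R0$ then there is $\Delta\in\mathbb N$ with $A(\sigma^\Delta z)>z$ for all $z\in R$. $R$ is regular if $r_{n+1}/r_n\to\theta$ for some $\theta\in\mathbb R_{>1}\cup\{\infty\}$ and, whenever $\theta$ is algebraic over $\mathbb Q$ with minimal polynomial $f(x)=\sum_{i=0}^ka_ix^i$, we have $\sum_{i=0}^ka_ir_{n+i}=0$ for all $n\in\mathbb N$. *)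

(* Defs.v *)
From HB Require Import structures.
From mathcomp Require Import all_boot all_order all_algebra.
From mathcomp Require Import all_classical all_reals all_analysis.
From mathcomp Require Import Rstruct Rstruct_topology.
Set Implicit Arguments. Unset Strict Implicit. Unset Printing Implicit Defensive.
Import Order.TTheory GRing.Theory Num.Theory.
Local Open Scope classical_set_scope.
Local Open Scope ring_scope.

Notation Real := Rdefinitions.R.

Definition increasing_enum (S : set nat) (r : nat -> nat) : Prop :=
  (forall n, (r n < r n.+1)%N) /\ (forall m, S m <-> exists n, r n = m).

(* An operator A z = a_m σ^m z + ... + a_0 σ^0 z, with coefficient list
   a = [:: a_0; ...; a_m], evaluated at z = r_n (so σ^i z = r_(n+i)). *)
Definition op_at (a : seq int) (r : nat -> nat) (n : nat) : int :=
  \sum_(i < size a) a`_i * (r (n + i)%N)%:Z.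

Definition op_eq0 (a : seq int) (r : nat -> nat) : Prop :=
  forall n, op_at a r n = 0.
Definition op_pos (a : seq int) (r : nat -> nat) : Prop :=
  exists N, forall n, (N <= n)%N -> 0 < op_at a r n.
Definition op_neg (a : seq int) (r : nat -> nat) : Prop :=
  exists N, forall n, (N <= n)%N -> op_at a r n < 0.

(* Sparseness (S1) and (S2); A(σ^Δ z) for z = r_n is op_at a r (n + Δ). *)
Definition sparse (r : nat -> nat) : Prop :=
  forall a : seq int,
    (op_eq0 a r \/ op_pos a r \/ op_neg a r) /\
    (op_pos a r -> exists D : nat, forall n, (r n)%:Z < op_at a r (n + D)%N).

Definition ratio_seq (r : nat -> nat) : nat -> Real :=
  fun n => (r n.+1)%:R / (r n)%:R.

Definition is_min_poly (theta : Real) (f : {poly rat}) : Prop :=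
  f \is monic /\ root (map_poly ratr f) theta /\
  forall g : {poly rat}, g != 0 -> root (map_poly ratr g) theta ->
    (size f <= size g)%N.

Definition regular (r : nat -> nat) : Prop :=
  (ratio_seq r @ \oo --> +oo) \/
  (exists theta : Real, 1 < theta /\ ratio_seq r @ \oo --> theta /\
     forall f : {poly rat}, is_min_poly theta f ->
       forall n, \sum_(i < size f) f`_i * (r (n + i)%N)%:R = 0 :> rat).

(* Main.v *)
Set Warnings "-all".
Require Import Defs.
From HB Require Import structures.
From mathcomp Require Import all_boot all_order all_algebra.
From mathcomp Require Import all_classical all_reals all_analysis.
From mathcomp Require Import Rstruct Rstruct_topology.
From mathcomp Require Import ring lra.
Set Implicit Arguments. Unset Strict Implicit. Unset Printing Implicit Defensive.
Import Order.TTheory GRing.Theory Num.Theory.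
Local Open Scope classical_set_scope.
Local Open Scope ring_scope.

Notation xx r n := (((r n)%:R) : Rdefinitions.R).

Section Basic.
Variable r : nat -> nat.
Hypothesis Hr : forall n, (r n < r n.+1)%N.

Lemma r_ge n : (n <= r n)%N.
Proof. elim: n => // n IH; exact: leq_ltn_trans IH (Hr n). Qed.

Lemma r_mono m n : (m <= n)%N -> (r m <= r n)%N.
Proof.
move=> H; rewrite -(subnK H); elim: (n - m)%N => [|k IH]; first by rewrite add0n.
rewrite addSn; exact: leq_trans IH (ltnW (Hr _)).
Qed.

Lemma x_mono m n : (m <= n)%N -> xx r m <= xx r n.
Proof. by move=> H; rewrite ler_nat r_mono. Qed.

Lemma x_ge n : n%:R <= xx r n.
Proof. by rewrite ler_nat r_ge. Qed.

Lemma x_ge0 n : 0 <= xx r n.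
Proof. exact: ler0n. Qed.

Lemma x_gt0 n : (1 <= n)%N -> 0 < xx r n.
Proof. by move=> H; rewrite ltr0n; exact: leq_trans H (r_ge n). Qed.

Lemma growth (mu : Rdefinitions.R) N0 : 1 < mu ->
  (forall n, (N0 <= n)%N -> mu * xx r n <= xx r n.+1) ->
  forall c : Rdefinitions.R, 0 < c -> exists D : nat,
    forall n d, (D <= d)%N -> xx r n < c * xx r (n + d)%N.
Proof.
move=> mu1 Hmu c c0.
set M := maxn N0 1.
have bern : forall n, (M <= n)%N -> forall d : nat,
    (1 + d%:R * (mu - 1)) * xx r n <= xx r (n + d)%N.
  move=> n Hn; elim=> [|d IH]; first by rewrite addn0 mul0r addr0 mul1r.
  have h1 : mu * xx r (n + d)%N <= xx r (n + d).+1.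
    apply: Hmu; apply: leq_trans (leq_addr _ _).
    exact: leq_trans (leq_maxl _ _) Hn.
  rewrite addnS; apply: le_trans h1.
  have h2 := x_ge0 n. have h3 : 0 <= d%:R :> Rdefinitions.R by exact: ler0n.
  have h4 : 0 <= d%:R * (mu - 1) * (mu - 1) * xx r n.
    apply: mulr_ge0 => //; apply: mulr_ge0; [apply: mulr_ge0 => //|]; lra.
  have h5 := ler_wpM2l (ltW (lt_trans ltr01 mu1)) IH.
  rewrite -natr1. nra.
have cm : 0 < c * (mu - 1) by apply: mulr_gt0 => //; lra.
set K := xx r M / c + 1 / (c * (mu - 1)).
have K0 : 0 <= K.
  apply: addr_ge0; apply: divr_ge0; [exact: x_ge0|exact: ltW|exact: ler01|exact: ltW].
exists (Num.Def.archi_bound K) => n d Hd.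
have hd : K < d%:R.
  apply: lt_le_trans (archi_boundP K0) _; by rewrite ler_nat.
have hd1 : 1 / (c * (mu - 1)) < d%:R.
  have : 0 <= xx r M / c by apply: divr_ge0; [exact: x_ge0|exact: ltW].
  rewrite /K in hd; lra.
have hd2 : xx r M / c < d%:R.
  have : 0 < 1 / (c * (mu - 1)) by apply: divr_gt0.
  rewrite /K in hd; lra.
rewrite ltr_pdivrMr // in hd1. rewrite ltr_pdivrMr // in hd2.
have xd : d%:R <= xx r (n + d)%N.
  apply: le_trans (x_ge d) (x_mono _); exact: leq_addl.
case: (leqP M n) => Hn.
- have := bern n Hn d. have := x_gt0 (leq_trans (leq_maxr _ _) Hn). nra.
- have : xx r n <= xx r M by apply: x_mono; exact: ltnW.
  nra.
Qed.
End Basic.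

Lemma op_atR (R : numDomainType) (a : seq int) (r : nat -> nat) n :
  (op_at a r n)%:~R = \sum_(i < size a) (a`_i)%:~R * ((r (n + i)%N)%:R : R).
Proof.
rewrite /op_at rmorph_sum /=; apply: eq_bigr => i _.
by rewrite intrM -pmulrn.
Qed.

Lemma cvg_ev (f g : nat -> Rdefinitions.R) (l : Rdefinitions.R) N :
  (forall n, (N <= n)%N -> f n = g n) -> g @ \oo --> l -> f @ \oo --> l.
Proof.
move=> H Hg; apply: cvg_trans Hg; apply: near_eq_cvg.
exists N => // n /= /H ->. by [].
Qed.

Section Lim.
Variable r : nat -> nat.
Hypothesis Hr : forall n, (r n < r n.+1)%N.
Variable theta : Rdefinitions.R.
Hypothesis Hlim : ratio_seq r @ \oo --> theta.

Lemma lim_pow i : (fun n => xx r (n + i)%N / xx r n) @ \oo --> theta ^+ i.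
Proof.
elim: i => [|i IH].
  apply: (@cvg_ev _ (fun=> 1) _ 1); last exact: cvg_cst.
  move=> n Hn; rewrite addn0 divff //; apply: lt0r_neq0; exact: x_gt0.
apply: (@cvg_ev _ (fun n => ratio_seq r (n + i)%N * (xx r (n + i)%N / xx r n)) _ 1).
  move=> n Hn; rewrite /ratio_seq mulrA divfK ?addnS //.
  apply: lt0r_neq0; apply: x_gt0 => //; exact: leq_trans Hn (leq_addr _ _).
rewrite exprS; apply: cvgM => //.
have := Hlim; rewrite -(cvg_shiftn i) //.
Qed.

Lemma lim_sum (c : nat -> Rdefinitions.R) k :
  (fun n => (\sum_(i < k) c i * xx r (n + i)%N) / xx r n) @ \oo -->
  \sum_(i < k) c i * theta ^+ i.
Proof.
have -> : (fun n => (\sum_(i < k) c i * xx r (n + i)%N) / xx r n) =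
   (fun n => \sum_(i < k) c i * (xx r (n + i)%N / xx r n)).
  apply: funext => n; rewrite mulr_suml; apply: eq_bigr => i _; by rewrite mulrA.
elim: k => [|k IH].
  have -> : (fun n => \sum_(i < 0) c i * (xx r (n + i)%N / xx r n)) = fun=> 0.
    by apply: funext => n; rewrite big_ord0.
  rewrite big_ord0; exact: cvg_cst.
have -> : (fun n => \sum_(i < k.+1) c i * (xx r (n + i)%N / xx r n)) =
   (fun n => \sum_(i < k) c i * (xx r (n + i)%N / xx r n) + c k * (xx r (n + k)%N / xx r n)).
  by apply: funext => n; rewrite big_ord_recr.
rewrite big_ord_recr /=.
have H := @cvgD Rdefinitions.R Rdefinitions.R^o _ _ _ _ _ _ _ IH
  (cvgM (cvg_cst (c k)) (@lim_pow k)).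
exact: H.
Qed.
End Lim.

Lemma nth_neg (a : seq int) (i : nat) : (map -%R a)`_i = - a`_i.
Proof.
case: (ltnP i (size a)) => H; first by rewrite (nth_map 0).
by rewrite !nth_default ?size_map // oppr0.
Qed.

Lemma op_at_neg (a : seq int) r n : op_at (map -%R a) r n = - op_at a r n.
Proof.
rewrite /op_at size_map -sumrN; apply: eq_bigr => i _.
by rewrite nth_neg mulNr.
Qed.

Section Zero.
Variable r : nat -> nat.
Hypothesis Hr : forall n, (r n < r n.+1)%N.
Hypothesis Hsp : sparse r.
Variable theta : Rdefinitions.R.
Hypothesis Hlim : ratio_seq r @ \oo --> theta.
Hypothesis theta0 : 0 < theta.

Lemma zero_not_pos (a : seq int) :
  \sum_(i < size a) (a`_i)%:~R * theta ^+ i = 0 -> ~ op_pos a r.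
Proof.
move=> Hs Hpos.
have [D HD] := (Hsp a).2 Hpos.
have L := @lim_sum r Hr theta Hlim (fun i => (a`_i)%:~R) (size a).
rewrite Hs in L.
have P := @lim_pow r Hr theta Hlim D.
set M := theta ^+ D.
have M0 : 0 < M by exact: exprn_gt0.
have e0 : 0 < 1 / (2 * M) by apply: divr_gt0 => //; apply: mulr_gt0.
have [N1 _ H1] := cvgr_lt _ L _ e0.
have M2 : M < 2 * M by lra.
have [N2 _ H2] := cvgr_lt _ P (2 * M) M2.
set n := maxn (maxn N1 N2) 1.
have h1 := H1 (n + D)%N (leq_trans (leq_trans (leq_maxl _ _) (leq_maxl _ _)) (leq_addr _ _)).
have h2 := H2 n (leq_trans (leq_maxr _ _) (leq_maxl _ _)).
have h3 := HD n.
have xn : 0 < xx r n by apply: x_gt0 => //; exact: leq_maxr.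
have xnD : 0 < xx r (n + D)%N by apply: x_gt0 => //; apply: leq_trans (leq_maxr _ _) (leq_addr _ _).
rewrite -(ltr_int Rdefinitions.R) op_atR in h3.
move: h1 h2 h3 => /= h1 h2 h3.
rewrite ltr_pdivrMr // in h1. rewrite ltr_pdivrMr // in h2.
have E : 1 / (2 * M) * (2 * M) = 1 by field; lra.
have : (r n)%:Z%:~R = xx r n by rewrite -pmulrn.
nra.
Qed.

Lemma zero_eq0 (a : seq int) :
  \sum_(i < size a) (a`_i)%:~R * theta ^+ i = 0 -> op_eq0 a r.
Proof.
move=> Hs; case: (Hsp a).1 => [//|[Hp|Hn]].
  by case: (zero_not_pos Hs Hp).
exfalso; apply: (@zero_not_pos (map -%R a)).
  rewrite size_map; under eq_bigr do rewrite nth_neg mulrNz mulNr.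
  by rewrite sumrN Hs oppr0.
case: Hn => N HN; exists N => n /HN; rewrite op_at_neg; lra.
Qed.
End Zero.

Lemma min_rel r (Hr : forall n, (r n < r n.+1)%N) (Hsp : sparse r)
  (theta : Rdefinitions.R) (Hlim : ratio_seq r @ \oo --> theta) (theta0 : 0 < theta)
  (f : {poly rat}) : is_min_poly theta f ->
  forall n, \sum_(i < size f) f`_i * (r (n + i)%N)%:R = 0 :> rat.
Proof.
case=> _ [Hroot _] n.
have [q [al al0 Hf]] := rat_poly_scale f.
have al1 : (al%:~R^-1 : rat) != 0 by rewrite invr_eq0 intr_eq0.
have sz : size f = size q.
  by rewrite Hf size_scale // size_map_inj_poly //; exact: intr_inj.
have cf : forall i, f`_i = al%:~R^-1 * (q`_i)%:~R.
  by move=> i; rewrite Hf coefZ coef_map.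
have Hs : \sum_(i < size q) ((q : seq int)`_i)%:~R * theta ^+ i = 0.
  move: Hroot; rewrite /root (horner_coef_wide _ (leqnn _)) size_map_poly sz.
  under eq_bigr do rewrite coef_map /= cf rmorphM /= ratr_int -mulrA.
  rewrite -mulr_sumr mulf_eq0 => /orP [|/eqP //].
  by rewrite fmorph_eq0 (negbTE al1).
have Z := @zero_eq0 r Hr Hsp theta Hlim theta0 q Hs n.
move/(congr1 (fun z : int => z%:~R : rat)): Z; rewrite op_atR => Z.
rewrite sz; under eq_bigr do rewrite cf -mulrA.
by rewrite -mulr_sumr Z mulr0.
Qed.

Lemma two_op (a : int) (b : nat) r n :
  (op_at [:: -a; b%:Z] r n)%:~R = b%:R * xx r n.+1 - a%:~R * xx r n.
Proof.
rewrite op_atR /= !big_ord_recr big_ord0 /= add0r addn0 addn1 -pmulrn intrN.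
by rewrite mulNr addrC.
Qed.

Lemma ratio_gt1 r (Hr : forall n, (r n < r n.+1)%N) n : (1 <= n)%N -> 1 < ratio_seq r n.
Proof.
move=> Hn; rewrite /ratio_seq ltr_pdivlMr ?mul1r ?ltr_nat //; exact: x_gt0.
Qed.

Lemma sparse_regular r (Hr : forall n, (r n < r n.+1)%N) : sparse r -> regular r.
Proof.
move=> Hsp.
pose E := [set y : Rdefinitions.R | exists N, forall n, (N <= n)%N -> y < ratio_seq r n].
have E1 : E 1 by exists 1%N => n; exact: ratio_gt1.
case: (pselect (has_ubound E)) => hub; last first.
  left; apply/cvgryPge => A.
  have [y [Ey yA]] : exists y, E y /\ A < y.
    apply: contrapT => H; apply: hub; exists A => y Ey.
    rewrite leNgt; apply/negP => yA; apply: H; by exists y.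
  case: Ey => N HN; exists N => // n /= /HN; lra.
have hsup : has_sup E by split; [exists 1|].
set theta := sup E.
have theta1 : 1 <= theta by exact: ub_le_sup.
have Hlim : ratio_seq r @ \oo --> theta.
  suff H : (ratio_seq r : nat -> Rdefinitions.R^o) @ \oo --> (theta : Rdefinitions.R^o) by exact: H.
  apply/cvgrPdist_lt => eps eps0.
  have [e Ee He] := sup_adherent eps0 hsup.
  case: Ee => N1 HN1; rewrite -/theta in He.
  have ie0 : 0 <= 1 / eps by apply: divr_ge0 => //; exact: ltW.
  set b := (Num.Def.archi_bound (1 / eps)).+1.
  have hb : 1 / eps < b%:R.
    apply: lt_le_trans (archi_boundP ie0) _; by rewrite ler_nat.
  have b0 : 0 < b%:R :> Rdefinitions.R by rewrite ltr0n.
  set a := (Num.Def.floor (theta * b%:R) + 1)%R.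
  have ha1 : theta * b%:R < a%:~R by exact: floorD1_gt.
  have ha2 : a%:~R <= theta * b%:R + 1.
    by rewrite /a intrD lerD2r floor_le.
  set q : Rdefinitions.R := a%:~R / b%:R.
  have qb : q * b%:R = a%:~R by rewrite /q divfK // lt0r_neq0.
  have tq : theta < q by rewrite /q ltr_pdivlMr.
  have qe : q < theta + eps.
    rewrite ltr_pdivrMr // in hb.
    have : q * b%:R <= theta * b%:R + 1 by rewrite qb.
    nra.
  have [N2 HN2] : exists N2, forall n, (N2 <= n)%N -> ratio_seq r n <= q.
    case: (Hsp [:: -a; b%:Z]).1 => [H0|[[N HN]|[N HN]]].
    - exists 1%N => n Hn; have := H0 n.
      move/(congr1 (fun z : int => z%:~R : Rdefinitions.R)); rewrite two_op /=.
      have xn := x_gt0 Hr Hn.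
      rewrite /ratio_seq ler_pdivrMr // => E0.
      rewrite -(ler_pM2l b0) mulrA (mulrC _ q) qb; lra.
    - exfalso; suff : E q by move/(ub_le_sup (proj2 hsup)); rewrite -/theta; lra.
      exists (maxn N 1) => n Hn.
      have := HN n (leq_trans (leq_maxl _ _) Hn).
      rewrite -(ltr_int Rdefinitions.R) two_op.
      have xn := x_gt0 Hr (leq_trans (leq_maxr _ _) Hn).
      rewrite /ratio_seq ltr_pdivlMr // => E0.
      rewrite -(ltr_pM2l b0) mulrA (mulrC _ q) qb; lra.
    - exists (maxn N 1) => n Hn.
      have := HN n (leq_trans (leq_maxl _ _) Hn).
      rewrite -(ltr_int Rdefinitions.R) two_op.
      have xn := x_gt0 Hr (leq_trans (leq_maxr _ _) Hn).
      rewrite /ratio_seq ler_pdivrMr // => E0.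
      rewrite -(ler_pM2l b0) mulrA (mulrC _ q) qb; lra.
  exists (maxn N1 N2) => // n /= Hn.
  have h1 := HN1 n (leq_trans (leq_maxl _ _) Hn).
  have h2 := HN2 n (leq_trans (leq_maxr _ _) Hn).
  rewrite ltr_distl; apply/andP; split; lra.
have theta0 : 0 < theta by lra.
right; exists theta; split; last split => //.
- rewrite lt_neqAle theta1 andbT; apply/eqP => t1.
  pose l : seq int := [:: - (1 : int); (1%N)%:Z].
  have Hs : \sum_(i < size l) (l`_i)%:~R * theta ^+ i = (0 : Rdefinitions.R).
    rewrite /= !big_ord_recr big_ord0 /= -t1 !expr1n add0r !mulr1.
    by rewrite intrN addNr.
  have := @zero_eq0 r Hr Hsp theta Hlim theta0 _ Hs 0%N.
  move/(congr1 (fun z : int => z%:~R : Rdefinitions.R)).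
  rewrite (two_op 1 1) /=; have := ltr_nat Rdefinitions.R (r 0%N) (r 1%N).
  rewrite Hr; lra.
- move=> f Hf n; exact: (@min_rel r Hr Hsp theta Hlim theta0 f Hf n).
Qed.

Lemma sum_wide (R : nzSemiRingType) (S : pzSemiRingType) (G : R -> S) (G0 : G 0 = 0)
  (p : {poly R}) (F : nat -> S) k : (size p <= k)%N ->
  \sum_(i < k) G p`_i * F i = \sum_(i < size p) G p`_i * F i.
Proof.
move=> H; rewrite -(subnKC H) big_split_ord /= [X in _ + X]big1 ?addr0 //.
move=> i _; rewrite nth_default ?G0 ?mul0r //; exact: leq_addr.
Qed.

Definition polyA (a : seq int) : {poly rat} := \poly_(i < size a) (a`_i)%:~R.

Lemma opP (a : seq int) r n :
  (op_at a r n)%:~R = \sum_(i < size (polyA a)) ratr (polyA a)`_i * xx r (n + i)%N.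
Proof.
rewrite op_atR -(@sum_wide _ _ ratr (rmorph0 _) (polyA a) (fun i => xx r (n + i)%N) (size a)); last exact: size_poly.
apply: eq_bigr => i _; by rewrite coef_poly ltn_ord ratr_int.
Qed.

Lemma polyA0 (a : seq int) r : polyA a = 0 -> op_eq0 a r.
Proof.
move=> H n; apply: (@intr_inj Rdefinitions.R); rewrite opP H size_poly0 big_ord0.
by [].
Qed.

Lemma min_exists (theta : Rdefinitions.R) (P : {poly rat}) :
  P != 0 -> root (map_poly ratr P) theta -> exists f, is_min_poly theta f.
Proof.
move=> P0 HP.
pose Q k := `[< exists g : {poly rat}, [/\ g != 0, root (map_poly ratr g) theta & size g = k] >].
have exQ : exists k, Q k by exists (size P); apply/asboolP; exists P.
case: (ex_minnP exQ) => k /asboolP [g [g0 rg sg]] kmin.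
have lc : lead_coef g != 0 by rewrite lead_coef_eq0.
exists ((lead_coef g)^-1 *: g); split; [|split].
- by rewrite monicE lead_coefZ mulVf.
- by rewrite map_polyZ /root hornerZ (eqP rg) mulr0.
- move=> h h0 rh; rewrite size_scale ?invr_eq0 // sg; apply: kmin.
  by apply/asboolP; exists h.
Qed.

Lemma div_rel (theta : Rdefinitions.R) f P : is_min_poly theta f ->
  root (map_poly ratr P) theta -> P = P %/ f * f.
Proof.
case=> mf [rf minf] rP.
have f0 : f != 0 by exact: monic_neq0.
have rm : root (map_poly ratr (P %% f)) theta.
  move: rP; rewrite {1}(divp_eq P f) /root rmorphD rmorphM /= hornerD hornerM.
  by rewrite (eqP rf) mulr0 add0r.
case: (eqVneq (P %% f) 0) => [H|H]; first by rewrite {1}(divp_eq P f) H addr0.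
have := minf _ H rm; rewrite leqNgt ltn_modp f0 //.
Qed.

Lemma size_MX_le (R : nzSemiRingType) (p : {poly R}) : (size (p * 'X)%R <= (size p).+1)%N.
Proof. by case: (eqVneq p 0) => [->|H]; rewrite ?mul0r ?size_poly0 // size_mulX. Qed.

Definition oq (r : nat -> nat) (p : {poly rat}) n : rat :=
  \sum_(i < size p) p`_i * (r (n + i)%N)%:R.

Lemma oq_wide r (p : {poly rat}) n k : (size p <= k)%N ->
  oq r p n = \sum_(i < k) p`_i * (r (n + i)%N)%:R.
Proof.
move=> H; rewrite /oq.
have := @sum_wide _ _ id erefl p (fun i => (r (n + i)%N)%:R : rat) k H.
by rewrite /= => ->.
Qed.

Lemma oqD r (p1 p2 : {poly rat}) n : oq r (p1 + p2) n = oq r p1 n + oq r p2 n.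
Proof.
rewrite (@oq_wide _ (p1 + p2) _ (size p1 + size p2)); last first.
  apply: leq_trans (size_polyD _ _) _; rewrite geq_max leq_addr leq_addl //.
rewrite (@oq_wide _ p1 _ (size p1 + size p2)) ?leq_addr //.
rewrite (@oq_wide _ p2 _ (size p1 + size p2)) ?leq_addl //.
rewrite -big_split /=; apply: eq_bigr => i _; by rewrite coefD mulrDl.
Qed.

Lemma oqZ r (c : rat) (p : {poly rat}) n : oq r (c *: p) n = c * oq r p n.
Proof.
rewrite (@oq_wide _ (c *: p) _ (size p)); last exact: size_scale_leq.
rewrite /oq mulr_sumr; apply: eq_bigr => i _; by rewrite coefZ mulrA.
Qed.

Lemma oqX r (p : {poly rat}) n : oq r (p * 'X) n = oq r p n.+1.
Proof.
rewrite (@oq_wide _ (p * 'X) _ (size p).+1); last exact: size_MX_le.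
rewrite big_ord_recl coefMX /= mul0r add0r /oq; apply: eq_bigr => i _.
by rewrite coefMX /= addnS addSn.
Qed.

Lemma rel_mul r (f : {poly rat}) : (forall n, oq r f n = 0) -> forall q n, oq r (q * f) n = 0.
Proof.
move=> Hf; elim/poly_ind => [|q c IH] n.
  by rewrite mul0r /oq size_poly0 big_ord0.
rewrite mulrDl mulrAC oqD oqX IH mul_polyC oqZ Hf.
by rewrite mulr0 addr0.
Qed.

Definition tri (a : seq int) (r : nat -> nat) : Prop :=
  op_eq0 a r \/
  (exists c : Rdefinitions.R, exists N, 0 < c /\
     forall n, (N <= n)%N -> c * xx r n < (op_at a r n)%:~R) \/
  (exists c : Rdefinitions.R, exists N, 0 < c /\
     forall n, (N <= n)%N -> (op_at a r n)%:~R < - (c * xx r n)).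

Lemma opQ (a : seq int) r n : (op_at a r n)%:~R = oq r (polyA a) n.
Proof.
rewrite op_atR (@oq_wide _ _ _ (size a)); last exact: size_poly.
apply: eq_bigr => i _; by rewrite coef_poly ltn_ord.
Qed.

Lemma tri_fin r (Hr : forall n, (r n < r n.+1)%N) (theta : Rdefinitions.R)
  (Hlim : ratio_seq r @ \oo --> theta)
  (Hrel : forall f : {poly rat}, is_min_poly theta f ->
       forall n, \sum_(i < size f) f`_i * (r (n + i)%N)%:R = 0 :> rat)
  (a : seq int) : tri a r.
Proof.
set P := polyA a.
have L := @lim_sum r Hr theta Hlim (fun i => ratr P`_i) (size P).
set l := \sum_(i < size P) ratr P`_i * theta ^+ i in L.
have hl : (map_poly ratr P).[theta] = l.
  rewrite (horner_coef_wide _ (leqnn _)) size_map_poly; apply: eq_bigr => i _.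
  by rewrite coef_map.
case: (ltgtP l 0) => Hl.
- right; right.
  have l2 : l < l / 2 by lra.
  have [N _ HN] := cvgr_lt _ L (l / 2) l2.
  exists (- (l / 2)), (maxn N 1); split; first by lra.
  move=> n Hn; have := HN n (leq_trans (leq_maxl _ _) Hn).
  have xn := x_gt0 Hr (leq_trans (leq_maxr _ _) Hn).
  rewrite /= -opP ltr_pdivrMr //; lra.
- right; left.
  have l2 : l / 2 < l by lra.
  have [N _ HN] := cvgr_gt _ L (l / 2) l2.
  exists (l / 2), (maxn N 1); split; first by lra.
  move=> n Hn; have := HN n (leq_trans (leq_maxl _ _) Hn).
  have xn := x_gt0 Hr (leq_trans (leq_maxr _ _) Hn).
  rewrite /= -opP ltr_pdivlMr //; lra.
- left; case: (eqVneq P 0) => [P0|P0]; first exact: polyA0.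
  have rP : root (map_poly ratr P) theta by rewrite /root hl Hl.
  have [f Hf] := min_exists P0 rP.
  have PQ := div_rel Hf rP.
  move=> n; apply: (@intr_inj rat); rewrite opQ -/P PQ.
  by apply: rel_mul => k; exact: (Hrel f Hf k).
Qed.

Lemma tri_inf r (Hr : forall n, (r n < r n.+1)%N)
  (Hinf : ratio_seq r @ \oo --> +oo) (a : seq int) : tri a r.
Proof.
set P := polyA a.
case: (eqVneq P 0) => [P0|P0]; first by left; exact: polyA0.
set m := (size P).-1.
have sP : size P = m.+1 by rewrite prednK // size_poly_gt0.
set L := ratr P`_m : Rdefinitions.R.
have L0 : L != 0.
  by rewrite fmorph_eq0 /m -lead_coefE lead_coef_eq0.
have aL : 0 < `|L| by rewrite normr_gt0.
set C := \sum_(i < m) `|ratr P`_i : Rdefinitions.R|.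
have C0 : 0 <= C by apply: sumr_ge0 => i _; exact: normr_ge0.
set K := 2 * C / `|L| + 2.
have K2 : 2 <= K.
  have : 0 <= 2 * C / `|L| by apply: divr_ge0; [lra | exact: ltW].
  rewrite /K; lra.
have hK : C <= `|L| / 2 * K.
  have E : `|L| / 2 * K = C + `|L| by rewrite /K; field; rewrite gt_eqF.
  rewrite E; lra.
move/cvgryPge: Hinf => /(_ K) [N _ HN].
set N' := maxn N 1.
have step : forall n, (N' <= n)%N -> K * xx r n <= xx r n.+1.
  move=> n Hn; have := HN n (leq_trans (leq_maxl _ _) Hn).
  have xn := x_gt0 Hr (leq_trans (leq_maxr _ _) Hn).
  by rewrite /= /ratio_seq ler_pdivlMr.
have main : forall n, (N' <= n)%N ->
   exists S, (op_at a r n)%:~R = S + L * xx r (n + m)%N /\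
             `|S| <= `|L| / 2 * xx r (n + m)%N.
  move=> n Hn.
  exists (\sum_(i < m) ratr P`_i * xx r (n + i)%N); split.
    by rewrite opP -/P sP big_ord_recr.
  have hi : forall i : 'I_m, xx r (n + i)%N <= xx r (n + m)%N / K.
    move=> i; rewrite ler_pdivlMr ?(lt_le_trans _ K2) // mulrC.
    apply: le_trans (step _ (leq_trans Hn (leq_addr _ _))) _.
    apply: x_mono => //; by rewrite -addnS leq_add2l.
  apply: le_trans (ler_norm_sum _ _ _) _.
  apply: le_trans (_ : \sum_(i < m) `|ratr P`_i : Rdefinitions.R| *
                         (xx r (n + m)%N / K) <= _).
    apply: ler_sum => i _; rewrite normrM (ger0_norm (x_ge0 _ _)).
    apply: ler_wpM2l => //; exact: hi.
  rewrite -mulr_suml -/C.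
  have y0 : 0 <= xx r (n + m)%N / K.
    apply: divr_ge0; [exact: x_ge0 | lra].
  have yK : xx r (n + m)%N / K * K = xx r (n + m)%N.
    by rewrite divfK // gt_eqF //; lra.
  nra.
case: (ltgtP L 0) => HL.
- right; right; exists (- L / 4), N'; split; first by lra.
  move=> n Hn; have [S [-> HS]] := main n Hn.
  have xn := x_gt0 Hr (leq_trans (leq_maxr _ _) Hn).
  have xm : xx r n <= xx r (n + m)%N by apply: x_mono => //; exact: leq_addr.
  move: HS; rewrite (ltr0_norm HL) ler_norml => /andP [_ HS].
  nra.
- right; left; exists (L / 4), N'; split; first by lra.
  move=> n Hn; have [S [-> HS]] := main n Hn.
  have xn := x_gt0 Hr (leq_trans (leq_maxr _ _) Hn).
  have xm : xx r n <= xx r (n + m)%N by apply: x_mono => //; exact: leq_addr.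
  move: HS; rewrite (gtr0_norm HL) ler_norml => /andP [HS _].
  nra.
- by move: L0; rewrite HL eqxx.
Qed.

Lemma regular_sparse r (Hr : forall n, (r n < r n.+1)%N) : regular r -> sparse r.
Proof.
move=> Hreg.
have [mu [N0 [mu1 Hmu]]] : exists mu : Rdefinitions.R, exists N0, 1 < mu /\
    forall n, (N0 <= n)%N -> mu * xx r n <= xx r n.+1.
  case: Hreg => [Hinf|[theta [t1 [Hlim _]]]].
    move/cvgryPge: Hinf => /(_ 2) [N _ HN].
    exists 2, (maxn N 1); split; first by lra.
    move=> n Hn; have := HN n (leq_trans (leq_maxl _ _) Hn).
    have xn := x_gt0 Hr (leq_trans (leq_maxr _ _) Hn).
    by rewrite /= /ratio_seq ler_pdivlMr.
  have h : (1 + theta) / 2 < theta by lra.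
  have [N _ HN] := cvgr_gt _ Hlim _ h.
  exists ((1 + theta) / 2), (maxn N 1); split; first by lra.
  move=> n Hn; have := HN n (leq_trans (leq_maxl _ _) Hn).
  have xn := x_gt0 Hr (leq_trans (leq_maxr _ _) Hn).
  rewrite /= /ratio_seq ltr_pdivlMr // => H; exact: ltW.
have Htri : forall a, tri a r.
  case: Hreg => [Hinf|[theta [t1 [Hlim Hrel]]]] a.
    exact: tri_inf.
  exact: (tri_fin Hr Hlim Hrel).
move=> a; split.
  case: (Htri a) => [H|[[c [N [c0 Hc]]]|[c [N [c0 Hc]]]]]; [by left| right; left| right; right].
    exists N => n Hn; rewrite -(ltr0z Rdefinitions.R).
    have := Hc n Hn; have := x_ge0 r n; nra.
  exists N => n Hn; rewrite -(ltrz0 Rdefinitions.R).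
  have := Hc n Hn; have := x_ge0 r n; nra.
case=> Np HNp.
case: (Htri a) => [H|[[c [N [c0 Hc]]]|[c [N [c0 Hc]]]]].
- by have := HNp Np (leqnn _); rewrite H.
- have [D HD] := growth Hr mu1 Hmu c0.
  exists (maxn D N) => n.
  have h1 := HD n (maxn D N) (leq_maxl _ _).
  have h2 := Hc (n + maxn D N)%N (leq_trans (leq_maxr _ _) (leq_addl _ _)).
  rewrite -(ltr_int Rdefinitions.R).
  have -> : (r n)%:Z%:~R = xx r n by rewrite -pmulrn.
  lra.
- exfalso; set n := maxn Np N.
  have h1 := HNp n (leq_maxl _ _).
  have h2 := Hc n (leq_maxr _ _).
  have := x_ge0 r n.
  rewrite -(ltr0z Rdefinitions.R) in h1; nra.
Qed.

Local Close Scope ring_scope.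

Theorem mainTheorem8 (S : set nat) (r : nat -> nat) :
  infinite_set S -> increasing_enum S r ->
  (sparse r <-> regular r).
Proof.
move=> _ [Hr _]; split; [exact: sparse_regular | exact: regular_sparse].
Qed.
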